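(* Consider the half-duplex (HD) single-stage relay selection (SRS) scheme described in the context with $K\ge1$ relays, with $\varpi=0$, thresholds $\gamma_{th_j}=2^{2R_{D_j}}-1$ for $j=1,2$, and power coefficients satisfying $0<a_1<a_2$, $a_1+a_2=1$, $a_2>a_1\gamma_{th_2}$. Then its diversity order equals the number of relays: $$-\lim_{\rho\to\infty}\frac{\log P_{SRS}^{HD}(\rho)}{\log\rho}=K .$$
   Context: Network model. A base station (BS) is at the origin of the plane. There are $K\ge 1$ relays $R_1,\dots,R_K$ whose positions are i.i.d. uniformly distributed in the disc of radius $R_{\mathcal D}>0$ centred at the origin; $d_{SR_i}$ is the distance from the BS to $R_i$. Two users $D_1,D_2$ are at fixed points of the plane at distances $d_1,d_2>0$ from the BS, and $d_{R_iD_j}$ is the Euclidean distance between $R_i$ and $D_j$. Let $\alpha>0$ be the path loss exponent. The random variables $g_{SR_i}$, $g_{R_iD_1}$, $g_{R_iD_2}$ ($i=1,\dots,K$) are exponentially distributed with mean $1$ (squared magnitudes of $\mathcal{CN}(0,1)$ Rayleigh coefficients), $Z_i$ is exponentially distributed with mean $\Omega_{LI}>0$, and all of these are mutually independent and independent of the relay positions. Put $X_i=g_{SR_i}/(1+d_{SR_i}^\alpha)$ and $Y_{ji}=g_{R_iD_j}/(1+d_{R_iD_j}^\alpha)$. Let $\rho>0$ be the transmit SNR, $a_1,a_2$ power allocation coefficients, and $\varpi\in\{0,1\}$ the duplex factor. Define $\gamma_{D_2\to R_i}=\frac{\rho X_i a_2}{\rho X_i a_1+\rho\varpi Z_i+1}$,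 $\gamma^{(i)}_{D_2\to D_1}=\frac{\rho Y_{1i}a_2}{\rho Y_{1i}a_1+1}$, $\gamma^{(i)}_{D_2}=\frac{\rho Y_{2i}a_2}{\rho Y_{2i}a_1+1}$. Target rates $R_{D_1},R_{D_2}>0$ are given; in HD mode $\varpi=0$ and $\gamma_{th_j}=2^{2R_{D_j}}-1$. SRS scheme: with $W_i=\min\{\gamma_{D_2\to R_i},\gamma^{(i)}_{D_2\to D_1},\gamma^{(i)}_{D_2}\}$, the outage probability is $P_{SRS}(\rho)=\Pr(\max_{1\le i\le K}W_i<\gamma_{th_2})$; $P_{SRS}^{HD}$ denotes it in HD mode. *)

(* Defs.v *)
From HB Require Import structures.
From mathcomp Require Import all_boot all_order all_algebra.
From mathcomp Require Import all_classical all_reals all_analysis.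
Set Implicit Arguments. Unset Strict Implicit. Unset Printing Implicit Defensive.
Import Order.TTheory GRing.Theory Num.Theory.
Import numFieldNormedType.Exports.
Local Open Scope classical_set_scope.
Local Open Scope ring_scope.

Definition gen_events {dT d' : measure_display} {T : measurableType dT}
  {T' : measurableType d'} (X : T -> T') : set (set T) :=
  [set X @^-1` B | B in [set B : set T' | measurable B]].

Definition mutually_independent {R : realType} {d : measure_display}
  {T : measurableType d} (P : probability T R) {I : finType}
  (F : I -> set (set T)) : Prop :=
  forall (S : {set I}) (A : I -> set T),
    (forall i, i \in S -> F i (A i)) ->
    P (\bigcap_(i in [set` S]) A i) = (\prod_(i in S) P (A i))%E.

Definition dist2 {R : realType} (p q : R * R) : R :=
  Num.sqrt ((p.1 - q.1) ^+ 2 + (p.2 - q.2) ^+ 2).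

Definition disc {R : realType} (r : R) : set (R * R) :=
  [set p | p.1 ^+ 2 + p.2 ^+ 2 <= r ^+ 2].

Definition uniform_in_disc {R : realType} {d : measure_display}
  {T : measurableType d} (P : probability T R) (r : R) (X : T -> R * R) : Prop :=
  forall A : set (R * R), measurable A ->
    P (X @^-1` A) =
    ((@lebesgue_measure R \x @lebesgue_measure R) (A `&` disc r)
       * ((pi * r ^+ 2)^-1)%:E)%E.

Definition exponential_mean {R : realType} {d : measure_display}
  {T : measurableType d} (P : probability T R) (m : R) (X : T -> R) : Prop :=
  forall A : set R, measurable A -> P (X @^-1` A) = exponential_prob (m^-1) A.

(* large-scale fading normalisation  g / (1 + dist^alpha) *)
Definition chan {R : realType} (alpha g dst : R) : R := g / (1 + dst `^ alpha).

Definition sinr {R : realType} (rho a1 a2 varpi V Z : R) : R :=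
  rho * V * a2 / (rho * V * a1 + rho * varpi * Z + 1).

(* W_i = min { gamma_{D2->R_i}, gamma^{(i)}_{D2->D1}, gamma^{(i)}_{D2} } *)
Definition W_SRS {R : realType} (rho a1 a2 varpi alpha : R) (D1 D2 : R * R)
  (pos : R * R) (gSR g1 g2 z : R) : R :=
  Num.min (sinr rho a1 a2 varpi (chan alpha gSR (dist2 pos (0, 0))) z)
   (Num.min (sinr rho a1 a2 0 (chan alpha g1 (dist2 pos D1)) 0)
            (sinr rho a1 a2 0 (chan alpha g2 (dist2 pos D2)) 0)).

(* outage probability of the SRS scheme:
   Pr( max_{1<=i<=K} W_i < gamma_th2 )  (all W_i >= 0, so 0 is a neutral seed) *)
Definition P_SRS {R : realType} {d : measure_display} {T : measurableType d}
  (P : probability T R) (K : nat) (pos : 'I_K -> T -> R * R)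
  (gSR g1 g2 Z : 'I_K -> T -> R) (a1 a2 varpi alpha gth2 : R) (D1 D2 : R * R)
  (rho : R) : R :=
  fine (P [set t | \big[Num.max/0]_(i < K)
             W_SRS rho a1 a2 varpi alpha D1 D2 (pos i t) (gSR i t) (g1 i t)
                   (g2 i t) (Z i t) < gth2]).

(* Main.v *)
Require Import Defs.
From HB Require Import structures.
From mathcomp Require Import all_boot all_order all_algebra.
From mathcomp Require Import all_classical all_reals all_analysis.
From mathcomp Require Import measurable_realfun.
From mathcomp Require Import ring lra.
Import Order.TTheory GRing.Theory Num.Theory.
Import numFieldNormedType.Exports.
Local Open Scope classical_set_scope.
Local Open Scope ring_scope.

Section meas.
Context {R : realType} {d : measure_display} {T : measurableType d}.

Lemma measurable_inv : measurable_fun [set: R] (@GRing.inv R).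
Proof.
have -> : (@GRing.inv R) = (fun x => if x == 0 then 0 else x^-1).
  by apply/funext => x; case: eqP => // ->; rewrite invr0.
apply: measurable_fun_if => //.
- by apply: measurable_fun_eqr.
- rewrite setTI.
  have -> : (fun x : R => x == 0) @^-1` [set false] = [set x | x != 0].
    by apply/seteqP; split => x /=; case: eqP.
  apply: open_continuous_measurable_fun.
    exact: open_neq.
  move=> x; rewrite inE /= => x0; exact: inv_continuous.
Qed.

Lemma mdist (p : T -> R * R) (q : R * R) : measurable_fun setT p ->
  measurable_fun setT (fun t => dist2 (p t) q).
Proof.
move=> mp; rewrite /dist2.
apply: (measurableT_comp (continuous_measurable_fun (@sqrt_continuous R))).
apply: measurable_funD; apply: measurable_funX; apply: measurable_funB => //.
- exact: (measurableT_comp measurable_fst mp).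
- exact: (measurableT_comp measurable_snd mp).
Qed.

Lemma mchan (alpha : R) (g dd : T -> R) : measurable_fun setT g ->
  measurable_fun setT dd -> measurable_fun setT (fun t => chan alpha (g t) (dd t)).
Proof.
move=> mg md; rewrite /chan.
apply: measurable_funM => //.
apply: (measurableT_comp measurable_inv).
apply: measurable_funD => //.
exact: (measurableT_comp (measurable_powR alpha) md).
Qed.

Lemma msinr (rho a1 a2 vp : R) (V Z : T -> R) : measurable_fun setT V ->
  measurable_fun setT Z -> measurable_fun setT (fun t => sinr rho a1 a2 vp (V t) (Z t)).
Proof.
move=> mV mZ; rewrite /sinr.
apply: measurable_funM.
  apply: measurable_funM => //; apply: measurable_funM => //.
apply: (measurableT_comp measurable_inv).
apply: measurable_funD => //; apply: measurable_funD => //.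
- apply: measurable_funM => //; apply: measurable_funM => //.
- apply: measurable_funM => //.
Qed.

Lemma mW (rho a1 a2 vp alpha : R) (D1 D2 : R * R) (p : T -> R * R)
  (gs g1 g2 z : T -> R) :
  measurable_fun setT p -> measurable_fun setT gs -> measurable_fun setT g1 ->
  measurable_fun setT g2 -> measurable_fun setT z ->
  measurable_fun setT (fun t => W_SRS rho a1 a2 vp alpha D1 D2 (p t) (gs t) (g1 t) (g2 t) (z t)).
Proof.
move=> mp ms m1 m2 mz; rewrite /W_SRS.
apply: measurable_minr; last apply: measurable_minr.
- by apply: msinr => //; apply: mchan => //; exact: mdist.
- by apply: msinr => //; apply: mchan => //; exact: mdist.
- by apply: msinr => //; apply: mchan => //; exact: mdist.
Qed.
End meas.

Section meas2.
Context {R : realType} {d : measure_display} {T : measurableType d}.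

Lemma mbigmax (I : Type) (s : seq I) (F : I -> T -> R) :
  (forall i, measurable_fun setT (F i)) ->
  measurable_fun setT (fun t => \big[Num.max/0]_(i <- s) F i t).
Proof.
move=> mF; elim: s => [|x s IH].
  have -> : (fun t => \big[Num.max/0]_(i <- [::]) F i t) = cst 0.
    by apply/funext => t; rewrite big_nil.
  exact: measurable_cst.
have -> : (fun t => \big[Num.max/0]_(i <- x :: s) F i t) =
  (F x) \max (fun t => \big[Num.max/0]_(i <- s) F i t).
  by apply/funext => t; rewrite big_cons.
exact: measurable_maxr.
Qed.

Lemma mforall (K : nat) (A : 'I_K -> set T) : (forall i, measurable (A i)) ->
  measurable [set t | forall i, A i t].
Proof.
move=> mA.
have -> : [set t | forall i, A i t] = \bigcap_(i in [set: 'I_K]) A i.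
  by apply/seteqP; split => t /= h i //; apply: h.
by apply: fin_bigcap_measurable => //; exact: finite_finset.
Qed.
End meas2.


Section alg.
Context {R : realType}.

Lemma sinr_lt (rho a1 a2 g V Z : R) : 0 < rho -> 0 < a1 -> 0 < g -> a1 * g < a2 ->
  0 <= V -> V < g / (a2 - a1 * g) / rho -> sinr rho a1 a2 0 V Z < g.
Proof.
move=> r0 a0 g0 ag V0 Vlt; rewrite /sinr mulr0 mul0r addr0.
have d0 : 0 < a2 - a1 * g by rewrite subr_gt0.
have w0 : 0 <= rho * V by rewrite mulr_ge0 // ltW.
rewrite ltr_pdivlMr // in Vlt; rewrite ltr_pdivlMr // in Vlt.
have hw : rho * V * (a2 - a1 * g) < g by rewrite (mulrC rho); exact: Vlt.
rewrite ltr_pdivrMr; last by rewrite ltr_wpDl // mulr_ge0 // ltW.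
set w := rho * V in w0 hw *; nra.
Qed.

Lemma sinr_ge (rho a1 a2 g V Z : R) : 0 < rho -> 0 < a1 -> 0 < g -> a1 * g < a2 ->
  g / (a2 - a1 * g) / rho <= V -> g <= sinr rho a1 a2 0 V Z.
Proof.
move=> r0 a0 g0 ag Vge; rewrite /sinr mulr0 mul0r addr0.
have d0 : 0 < a2 - a1 * g by rewrite subr_gt0.
rewrite ler_pdivrMr // in Vge; rewrite ler_pdivrMr // in Vge.
have hw : g <= rho * V * (a2 - a1 * g) by rewrite (mulrC rho).
have w0 : 0 <= rho * V.
  by rewrite -(pmulr_rge0 _ d0) mulrC (le_trans _ hw) // ltW.
rewrite ler_pdivlMr; last by rewrite ltr_wpDl // mulr_ge0 // ltW.
set w := rho * V in w0 hw *; nra.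
Qed.
End alg.


Section expo.
Context {R : realType}.

Lemma mexpo : measurable_fun setT (EFin \o (@exponential_pdf R 1)).
Proof. by apply/measurable_EFinP; exact: measurable_exponential_pdf. Qed.

Lemma expo_lt_le (u : R) : 0 < u -> (exponential_prob 1 `]-oo, u[ <= u%:E)%E.
Proof.
move=> u0.
have pos : forall x, (0 <= (EFin \o (@exponential_pdf R 1)) x)%E.
  by move=> x; rewrite lee_fin exponential_pdf_ge0.
rewrite /exponential_prob.
have sub : (`]-oo, u[%classic : set R) `<=` `]-oo, 0[%classic `|` `[0, u]%classic.
  move=> x /=; rewrite !in_itv /= => xu.
  by case: (ltP x 0) => x0; [left | right; rewrite /= ltW].
apply: le_trans.
  apply: ge0_subset_integral; [| | | | exact: sub].
  - exact: measurable_itv.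
  - by apply: measurableU; exact: measurable_itv.
  - apply: measurable_funTS; apply: measurableT_comp => //; exact: measurable_exponential_pdf.
  - by move=> x _; rewrite lee_fin exponential_pdf_ge0.
rewrite /= ge0_integral_setU //; first last.
- rewrite disj_set2E; apply/eqP/seteqP; split => // x [] /=.
  by rewrite !in_itv /= => x0 /andP[/(lt_le_trans x0)]; rewrite ltxx.
- by move=> x _; rewrite lee_fin exponential_pdf_ge0.
- apply: measurable_funTS; apply: measurableT_comp => //; exact: measurable_exponential_pdf.
rewrite [X in (X + _)%E]integral0_eq; last first.
  by move=> x /=; rewrite in_itv /= => x0; rewrite lt0_exponential_pdf.
rewrite add0e /= -/(exponential_prob 1 _) exponential_prob_itv0c // mulN1r lee_fin.
have := expR_ge1Dx (- u); lra.
Qed.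

Lemma expo_itv0c (s : R) : 0 < s ->
  exponential_prob 1 `[0, s] = (1 - expR (- s))%:E.
Proof. by move=> s0; rewrite exponential_prob_itv0c // mulN1r. Qed.
End expo.


Section indep.
Context {R : realType} {d : measure_display} {T : measurableType d}.
Variable P : probability T R.

Lemma indep_prod (K : nat) (F : 'I_K * 'I_5 -> set (set T)) (k : 'I_K -> 'I_5)
  (A : 'I_K -> set T) :
  mutually_independent P F -> (forall i, F (i, k i) (A i)) ->
  P [set t | forall i, A i t] = (\prod_(i < K) P (A i))%E.
Proof.
move=> HI HA.
pose S : {set 'I_K * 'I_5} := [set (i, k i) | i : 'I_K].
have := HI S (fun ik => A ik.1).
have H1 : forall ik, ik \in S -> F ik (A ik.1).
  by move=> ik /imsetP [i _ ->] /=; exact: HA.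
move=> /(_ H1) HS.
have -> : [set t | forall i, A i t] = \bigcap_(ik in [set` S]) A ik.1.
  apply/seteqP; split => t /=.
    by move=> Ht ik /= /imsetP [i _ ->]; exact: Ht.
  move=> Ht i; apply: (Ht (i, k i)) => /=.
  by apply/imsetP; exists i.
rewrite HS big_imset /=; last by move=> i j _ _ [].
by apply: eq_bigl => i; rewrite inE.
Qed.
End indep.


Section misc.
Context {R : realType}.

Lemma bigmax0_lt (I : Type) (s : seq I) (F : I -> R) (g : R) : 0 < g ->
  (\big[Num.max/0]_(i <- s) F i < g) = all (fun i => F i < g) s.
Proof.
move=> g0; elim: s => [|x s IH]; first by rewrite big_nil.
by rewrite big_cons /= gt_max IH.
Qed.

Lemma chan_le (alpha g dd : R) : 0 <= g -> 0 <= chan alpha g dd <= g.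
Proof.
move=> g0; rewrite /chan.
have c1 : 1 <= 1 + dd `^ alpha by rewrite lerDl powR_ge0.
have c0 : 0 < 1 + dd `^ alpha by apply: lt_le_trans c1.
rewrite divr_ge0 /=; last exact: ltW; last by [].
rewrite ler_pdivrMr //; nra.
Qed.

Lemma chan_ge (alpha g dd B u : R) : 0 <= alpha -> 0 <= dd -> dd <= B -> 0 <= u ->
  u * (1 + B `^ alpha) <= g -> u <= chan alpha g dd.
Proof.
move=> a0 d0 dB u0 ug; rewrite /chan.
have c0 : 0 < 1 + dd `^ alpha by rewrite ltr_pwDl // powR_ge0.
rewrite ler_pdivlMr //; apply: le_trans ug.
rewrite ler_wpM2l // lerD2l; apply: ge0_ler_powR => //; rewrite nnegrE //.
exact: le_trans dB.
Qed.

Lemma dist2_ge0 (p q : R * R) : 0 <= dist2 p q.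
Proof. exact: sqrtr_ge0. Qed.

Lemma dist2_le (r N : R) (p q : R * R) : p.1 ^+ 2 + p.2 ^+ 2 <= r ^+ 2 ->
  q.1 ^+ 2 + q.2 ^+ 2 <= N -> dist2 p q <= Num.sqrt (2 * r ^+ 2 + 2 * N).
Proof.
move=> hp hq; rewrite /dist2 ler_sqrt; last first.
  apply: addr_ge0; rewrite mulr_ge0 // ?sqr_ge0 //.
  by apply: le_trans hq; rewrite addr_ge0 // sqr_ge0.
have e1 : (p.1 - q.1) ^+ 2 <= 2 * p.1 ^+ 2 + 2 * q.1 ^+ 2.
  have := sqr_ge0 (p.1 + q.1); rewrite sqrrD sqrrB; lra.
have e2 : (p.2 - q.2) ^+ 2 <= 2 * p.2 ^+ 2 + 2 * q.2 ^+ 2.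
  have := sqr_ge0 (p.2 + q.2); rewrite sqrrD sqrrB; lra.
lra.
Qed.

Lemma gth_pos (x : R) : 0 < x -> 0 < 2 `^ x - 1.
Proof.
move=> x0; rewrite subr_gt0 lt_neqAle eq_sym powR_eq1 negb_or /=.
rewrite (gt_eqF x0) /= -[X in X <= _](powRr0 2) ler_powR ?ltW //.
  by rewrite orbF andbT; apply/andP; split; [rewrite eq_sym lt_eqF // ltr1n | rewrite -leNgt].
by rewrite ltr1n.
Qed.

End misc.


Section lim.
Context {R : realType}.

Lemma diversity (p : R -> R) (K : nat) (c1 c2 r0 : R) : 0 < c1 -> 0 < c2 ->
  (forall rho, r0 < rho -> c1 / rho ^+ K <= p rho <= c2 / rho ^+ K) ->
  (- ln (p rho) / ln rho) @[rho --> +oo] --> (K%:R : R).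
Proof.
move=> c10 c20 Hb.
apply/cvgrPdist_lt => e e0.
set M := `|ln c1| + `|ln c2|.
near=> rho.
have r1 : 1 < rho by near: rho; apply: nbhs_pinfty_gt; rewrite num_real.
have rr0 : r0 < rho by near: rho; apply: nbhs_pinfty_gt; rewrite num_real.
have rM : expR (M / e) < rho by near: rho; apply: nbhs_pinfty_gt; rewrite num_real.
have rho0 : 0 < rho by apply: lt_trans r1.
have L0 : 0 < ln rho by rewrite ln_gt0.
have LM : M / e < ln rho.
  by rewrite -ltr_expR lnK // posrE.
have rK0 : 0 < rho ^+ K by rewrite exprn_gt0.
have /andP [hl hu] := Hb rho rr0.
have p0 : 0 < p rho by apply: lt_le_trans hl; rewrite divr_gt0.
have lnq c : 0 < c -> ln (c / rho ^+ K) = ln c - ln rho *+ K.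
  move=> c0; rewrite lnM ?posrE ?invr_gt0 // lnV ?posrE // lnXn //.
have hl' : ln c1 - ln rho *+ K <= ln (p rho).
  by rewrite -lnq // ler_ln ?posrE ?divr_gt0.
have hu' : ln (p rho) <= ln c2 - ln rho *+ K.
  by rewrite -lnq // ler_ln ?posrE ?divr_gt0.
have eq1 : K%:R - - ln (p rho) / ln rho = (ln (p rho) + ln rho *+ K) / ln rho.
  by rewrite -mulr_natr; field; rewrite gt_eqF.
have Li : 0 < (ln rho)^-1 by rewrite invr_gt0.
rewrite eq1 normrM (gtr0_norm Li) ltr_pdivrMr //.
have h1 : `|ln (p rho) + ln rho *+ K| <= M.
  rewrite ler_norml; apply/andP; split.
    have := ler_norm (- ln c1); rewrite normrN; have := normr_ge0 (ln c2); rewrite /M; lra.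
  have := ler_norm (ln c2); have := normr_ge0 (ln c1); rewrite /M; lra.
apply: le_lt_trans h1 _.
by rewrite mulrC -ltr_pdivrMr.
Unshelve. all: by end_near.
Qed.
End lim.


Section ub.
Context {R : realType} {d : measure_display} {T : measurableType d}.
Variable P : probability T R.

Lemma union_bound (I : Type) (s : seq I) (C : I -> set T) :
  (forall i, measurable (C i)) ->
  (P (\big[setU/set0]_(i <- s) C i) <= \sum_(i <- s) P (C i))%E.
Proof.
move=> mC; elim: s => [|x s IH]; first by rewrite !big_nil measure0.
rewrite !big_cons; apply: le_trans (measureU2 _ _ _) _ => //.
- exact: bigsetU_measurable.
- exact: leeD.
Qed.

Lemma in_bigsetU (I : eqType) (s : seq I) (C : I -> set T) x t :
  x \in s -> C x t -> (\big[setU/set0]_(i <- s) C i) t.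
Proof.
elim: s => [|y s IH] //; rewrite in_cons big_cons => /orP [/eqP <- Ct|xs Ct].
  by left.
by right; apply: IH.
Qed.

Lemma mdisc (r : R) : measurable (disc r : set (R * R)).
Proof.
have mf : measurable_fun setT (fun p : R * R => p.1 ^+ 2 + p.2 ^+ 2).
  by apply: measurable_funD; apply: measurable_funX; [exact: measurable_fst | exact: measurable_snd].
have := mf measurableT _ (@measurable_itv _ `]-oo, r ^+ 2]).
rewrite setTI; congr measurable; apply/seteqP; split => x /=; rewrite in_itv //=.
Qed.
End ub.


Theorem mainTheorem2 (R : realType) (d : measure_display) (T : measurableType d)
  (P : probability T R) (K : nat)
  (pos : 'I_K -> {RV P >-> (R * R)%type}) (gSR g1 g2 Z : 'I_K -> {RV P >-> R})
  (RDisc alpha OmegaLI a1 a2 RD1 RD2 : R) (D1 D2 : R * R) :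
  (1 <= K)%N ->
  0 < RDisc -> 0 < alpha -> 0 < OmegaLI ->
  0 < dist2 D1 (0, 0) -> 0 < dist2 D2 (0, 0) ->
  0 < RD1 -> 0 < RD2 ->
  (forall i, uniform_in_disc P RDisc (pos i)) ->
  (forall i, exponential_mean P 1 (gSR i)) ->
  (forall i, exponential_mean P 1 (g1 i)) ->
  (forall i, exponential_mean P 1 (g2 i)) ->
  (forall i, exponential_mean P OmegaLI (Z i)) ->
  mutually_independent P (fun ik : 'I_K * 'I_5 =>
    match val ik.2 with
    | 0 => gen_events (pos ik.1)
    | 1 => gen_events (gSR ik.1)
    | 2 => gen_events (g1 ik.1)
    | 3 => gen_events (g2 ik.1)
    | _ => gen_events (Z ik.1)
    end) ->
  let gth1 := 2 `^ (2 * RD1) - 1 in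
  let gth2 := 2 `^ (2 * RD2) - 1 in
  0 < a1 -> a1 < a2 -> a1 + a2 = 1 -> a2 > a1 * gth2 ->
  (- ln (P_SRS P (fun i => pos i) (fun i => gSR i) (fun i => g1 i)
           (fun i => g2 i) (fun i => Z i) a1 a2 0 alpha gth2 D1 D2 rho)
     / ln rho) @[rho --> +oo] --> (K%:R : R).
Proof.
move=> K1 Rd0 al0 Om0 dD1 dD2 RD10 RD20 Hpos HgS Hg1 Hg2 HZ HI gth1 gth2 a10 a12 a1a2 agth.
have g0 : 0 < gth2 by apply: gth_pos; rewrite mulr_gt0.
have d20 : 0 < a2 - a1 * gth2 by rewrite subr_gt0.
pose th := gth2 / (a2 - a1 * gth2).
have th0 : 0 < th by rewrite divr_gt0.
pose N := D1.1 ^+ 2 + D1.2 ^+ 2 + (D2.1 ^+ 2 + D2.2 ^+ 2).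
have N1 : D1.1 ^+ 2 + D1.2 ^+ 2 <= N by rewrite /N lerDl addr_ge0 // sqr_ge0.
have N2 : D2.1 ^+ 2 + D2.2 ^+ 2 <= N by rewrite /N lerDr addr_ge0 // sqr_ge0.
have N0 : ((0, 0) : R * R).1 ^+ 2 + ((0, 0) : R * R).2 ^+ 2 <= N.
  by rewrite /= expr0n /= addr0 /N addr_ge0 // addr_ge0 // sqr_ge0.
pose Bd := Num.sqrt (2 * RDisc ^+ 2 + 2 * N).
pose cB := 1 + Bd `^ alpha.
have cB0 : 0 < cB by rewrite ltr_pwDl // powR_ge0.
have mRV : forall (X : {RV P >-> R}), measurable_fun setT X.
  by move=> X; exact: (@measurable_funP _ _ _ _ setT X).
have mRV2 : forall (X : {RV P >-> (R * R)%type}), measurable_fun setT X.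
  by move=> X; exact: (@measurable_funP _ _ _ _ setT X).
have expo_eq : forall (X : {RV P >-> R}) (A : set R), exponential_mean P 1 X ->
    measurable A -> P (X @^-1` A) = exponential_prob 1 A.
  by move=> X A HX mA; rewrite HX // invr1.
pose p := fun rho => P_SRS P (fun i => pos i) (fun i => gSR i) (fun i => g1 i)
           (fun i => g2 i) (fun i => Z i) a1 a2 0 alpha gth2 D1 D2 rho.
apply: (@diversity R p K ((th / 4) ^+ K) ((4 * cB * th) ^+ K) (Num.max 1 th)).
- by rewrite exprn_gt0 // divr_gt0.
- by apply: exprn_gt0; apply: mulr_gt0 => //; apply: mulr_gt0.
move=> rho; rewrite gt_max => /andP [r1 rth].
have rho0 : 0 < rho by apply: lt_trans r1.
pose Wf := fun i t => W_SRS rho a1 a2 0 alpha D1 D2 (pos i t) (gSR i t) (g1 i t) (g2 i t) (Z i t).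
pose E := [set t | \big[Num.max/0]_(i < K) Wf i t < gth2].
have pE : p rho = fine (P E) by [].
have mE : measurable E.
  have mM := @mbigmax R d T 'I_K (index_enum 'I_K) Wf (fun i => @mW R d T rho a1 a2 0 alpha D1 D2 _ _ _ _ _
     (mRV2 (pos i)) (mRV (gSR i)) (mRV (g1 i)) (mRV (g2 i)) (mRV (Z i))).
  have := mM measurableT _ (@measurable_itv R `]-oo, gth2[).
  rewrite setTI; congr measurable; apply/seteqP; split => t /=; rewrite in_itv //=.
have fE : P E = (fine (P E))%:E by rewrite fineK // fin_num_measure.
rewrite pE; apply/andP; split.
  pose s := th / (2 * rho).
  have s0 : 0 < s by rewrite divr_gt0 // mulr_gt0.
  have thr0 : 0 < th / rho by rewrite divr_gt0.
  have thr1 : th / rho < 1 by rewrite ltr_pdivrMr // mul1r.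
  have sE : s = (th / rho) / 2 by rewrite /s; field; rewrite gt_eqF.
  have sth : s < th / rho by rewrite sE; lra.
  have s1 : s <= 1 by rewrite sE; lra.
  pose L := [set t | forall i, (gSR i @^-1` `[0, s]) t].
  have mL : measurable L.
    by apply: mforall => i; apply: measurable_funPTI; exact: measurable_itv.
  have LE : L `<=` E.
    move=> t Lt; rewrite /E /= bigmax0_lt //; apply/allP => i _.
    have := Lt i; rewrite /= in_itv /= => /andP [h0 hs].
    rewrite /Wf /W_SRS gt_min; apply/orP; left.
    have /andP [c0 cs] := @chan_le R alpha _ (dist2 (pos i t) (0, 0)) h0.
    apply: sinr_lt => //.
    by apply: le_lt_trans cs _; apply: le_lt_trans hs _.
  have PL : P L = ((1 - expR (- s)) ^+ K)%:E.
    rewrite (@indep_prod R d T P K _ (fun=> Ordinal (isT : (1 < 5)%N))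
      (fun i => gSR i @^-1` `[0, s]) HI).
      under eq_bigr => i _ do rewrite (expo_eq (gSR i) _ (HgS i) (measurable_itv _)) expo_itv0c //.
      by rewrite prodEFin prodr_const card_ord.
    move=> i /=; exists `[0, s]%classic => //; exact: measurable_itv.
  have : (P L <= P E)%E by apply: le_measure => //; rewrite inE.
  rewrite PL fE lee_fin => h; apply: le_trans h.
  have -> : (th / 4) ^+ K / rho ^+ K = (s / 2) ^+ K.
    by rewrite -expr_div_n; congr (_ ^+ _); rewrite /s; field; rewrite gt_eqF.
  apply: lerXn2r; rewrite ?nnegrE.
  - by rewrite divr_ge0 // ltW.
  - by rewrite subr_ge0 -expR0 ler_expR oppr_le0 ltW.
  have e1 := expR_ge1Dx s.
  have ep : 0 < expR (- s) by rewrite expR_gt0.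
  have h2 : expR (- s) * (1 + s) <= 1.
    have h3 : expR (- s) * expR s = 1 by rewrite -expRD addNr expR0.
    by rewrite -[leRHS]h3 ler_wpM2l // ltW.
  nra.
pose u := cB * th / rho.
have u0 : 0 < u by rewrite divr_gt0 // mulr_gt0.
pose Bk := fun (i : 'I_K) (k : 'I_4) =>
  match val k with
  | 0%N => gSR i @^-1` `]-oo, u[
  | 1%N => g1 i @^-1` `]-oo, u[
  | 2%N => g2 i @^-1` `]-oo, u[
  | _ => pos i @^-1` (~` disc RDisc)
  end.
have mBk : forall i k, measurable (Bk i k).
  move=> i [[|[|[|m]]] hm]; rewrite /Bk /=;
    try (apply: measurable_funPTI; exact: measurable_itv).
  by apply: measurable_funPTI; apply: measurableC; exact: mdisc.
pose C := fun f : {ffun 'I_K -> 'I_4} => [set t | forall i, Bk i (f i) t].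
have mC : forall f, measurable (C f) by move=> f; apply: mforall.
have EU : E `<=` \big[setU/set0]_(f <- index_enum {ffun 'I_K -> 'I_4}) C f.
  move=> t Et.
  have Hk : forall i, exists k, Bk i k t.
    move=> i.
    have Wi : Wf i t < gth2.
      by move: Et; rewrite /E /= bigmax0_lt // => /allP; apply; exact: mem_index_enum.
    case: (ltP (gSR i t) u) => h0.
      by exists (Ordinal (isT : (0 < 4)%N)); rewrite /Bk /= in_itv /=.
    case: (ltP (g1 i t) u) => h1.
      by exists (Ordinal (isT : (1 < 4)%N)); rewrite /Bk /= in_itv /=.
    case: (ltP (g2 i t) u) => h2.
      by exists (Ordinal (isT : (2 < 4)%N)); rewrite /Bk /= in_itv /=.
    case: (boolP ((pos i t).1 ^+ 2 + (pos i t).2 ^+ 2 <= RDisc ^+ 2)) => hd; last first.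
      by exists (Ordinal (isT : (3 < 4)%N)); rewrite /Bk /=; apply/negP.
    exfalso; move: Wi; apply/negP; rewrite -leNgt.
    have key : forall (g : R) (q : R * R) (z : R), u <= g ->
        q.1 ^+ 2 + q.2 ^+ 2 <= N ->
        gth2 <= sinr rho a1 a2 0 (chan alpha g (dist2 (pos i t) q)) z.
      move=> g q z ug qN.
      apply: sinr_ge => //.
      apply: (@chan_ge R alpha g _ Bd) => //.
      - exact: ltW.
      - exact: dist2_ge0.
      - exact: dist2_le.
      - by rewrite ltW // divr_gt0.
      apply: le_trans ug; rewrite le_eqVlt; apply/orP; left; apply/eqP.
      rewrite /u /cB /th; field; by rewrite !gt_eqF.
    rewrite /Wf /W_SRS !Order.TotalTheory.le_min.
    by rewrite !key.
  case: (choice Hk) => fk Hfk.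
  apply: (@in_bigsetU d T _ _ _ [ffun i => fk i]); first exact: mem_index_enum.
  by move=> i; rewrite ffunE.
have : (P E <= P (\big[setU/set0]_(f <- index_enum {ffun 'I_K -> 'I_4}) C f))%E.
  by apply: le_measure; rewrite ?inE //; exact: bigsetU_measurable.
move/le_trans/(_ (@union_bound R d T P _ (index_enum _) C mC)).
pose kk := fun k : 'I_4 => match val k with
  | 0%N => Ordinal (isT : (1 < 5)%N)
  | 1%N => Ordinal (isT : (2 < 5)%N)
  | 2%N => Ordinal (isT : (3 < 5)%N)
  | _ => Ordinal (isT : (0 < 5)%N) end.
have PC : forall f, P (C f) = (\prod_(i < K) P (Bk i (f i)))%E.
  move=> f; apply: (@indep_prod R d T P K _ (fun i => kk (f i)) (fun i => Bk i (f i)) HI) => i.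
  rewrite /Bk /kk; case: (f i) => [[|[|[|m]]] hm] /=.
  - by exists `]-oo, u[%classic => //; exact: measurable_itv.
  - by exists `]-oo, u[%classic => //; exact: measurable_itv.
  - by exists `]-oo, u[%classic => //; exact: measurable_itv.
  - by exists (~` disc RDisc) => //; apply: measurableC; exact: mdisc.
pose q := fun i k => fine (P (Bk i k)).
have Pq : forall i k, P (Bk i k) = (q i k)%:E.
  by move=> i k; rewrite /q fineK // fin_num_measure.
have -> : (\sum_(f <- index_enum {ffun 'I_K -> 'I_4}) P (C f))%E =
    (\sum_(f <- index_enum {ffun 'I_K -> 'I_4}) \prod_(i < K) q i (f i))%:E.
  rewrite -sumEFin; apply: eq_bigr => f _; rewrite PC -prodEFin.
  by apply: eq_bigr => i _; exact: Pq.
rewrite fE lee_fin => h; apply: le_trans h _.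
rewrite -(bigA_distr_bigA q).
have qu : forall i k, 0 <= q i k <= u.
  move=> i k; rewrite /q fine_ge0 ?measure_ge0 //=.
  rewrite -lee_fin -Pq.
  case: k => [[|[|[|m]]] hm]; rewrite /Bk /=.
  - by rewrite (expo_eq _ _ (HgS i) (measurable_itv _)); exact: expo_lt_le.
  - by rewrite (expo_eq _ _ (Hg1 i) (measurable_itv _)); exact: expo_lt_le.
  - by rewrite (expo_eq _ _ (Hg2 i) (measurable_itv _)); exact: expo_lt_le.
  rewrite Hpos; last by apply: measurableC; exact: mdisc.
  by rewrite setICl measure0 mul0e lee_fin ltW.
apply: le_trans (_ : \prod_(i < K) (u *+ 4) <= _).
  apply: ler_prod => i _; apply/andP; split.
    by apply: sumr_ge0 => k _; case/andP: (qu i k).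
  apply: le_trans (_ : \sum_(k < 4) u <= _); last by rewrite sumr_const card_ord.
  by apply: ler_sum => k _; case/andP: (qu i k).
rewrite prodr_const card_ord -expr_div_n le_eqVlt; apply/orP; left; apply/eqP.
congr (_ ^+ _); rewrite /u; field; by rewrite gt_eqF.
Qed.
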